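(* Let $K$ be a number field, $\gamma\in\mathcal O_K$ a primitive element with monic minimal polynomial $f\in\mathbb Z[x]$, and let $I = a\mathcal O_K + \alpha\mathcal O_K$ with $a$ a positive integer and $\alpha\in\mathcal O_K$. Assume $\gcd(a, [\mathcal O_K:\mathbb Z[\gamma]]) = 1$. Let $g\in\mathbb Q[x]$ satisfy $g(\gamma) = \alpha$ and have coefficients whose denominators are coprime to $a$, and let $\bar g,\bar f$ be the images in $(\mathbb Z/a\mathbb Z)[x]$. Then $\min(I)$ is the unique positive divisor $m$ of $a$ such that $\mathrm{Rres}_{\mathbb Z/a\mathbb Z}(\bar g, \bar f)$ is the ideal generated by $m \bmod a$ in $\mathbb Z/a\mathbb Z$.
   Context: $\mathcal O_K$ is the ring of integers of $K$. The minimum $\min(I)$ is the positive integer with $I\cap\mathbb Z = \min(I)\mathbb Z$. For a commutative ring $S$ and $p,q \in S[x]$, $\mathrm{Rres}_S(p,q) = (p,q)\cap S$, where $(p,q)$ is the ideal of $S[x]$ generated by $p,q$. *)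

(* Defs.v *)
From HB Require Import structures.
From mathcomp Require Import all_boot all_order all_algebra all_field.
Set Implicit Arguments. Unset Strict Implicit. Unset Printing Implicit Defensive.
Import Order.TTheory GRing.Theory Num.Theory.
Local Open Scope ring_scope.

(* A number field is modelled as K : fieldExtType rat (finite-dimensional
   extension of Q). *)

Definition integral (K : fieldExtType rat) (x : K) : Prop :=
  exists p : {poly int}, p \is monic /\ root (map_poly intr p) x.

Definition inZgamma (K : fieldExtType rat) (gamma x : K) : Prop :=
  exists p : {poly int}, x = (map_poly intr p).[gamma].

(* [O_K : Z[gamma]] = d  (cardinality of the quotient group O_K / Z[gamma]):
   there are d elements of O_K, pairwise incongruent mod Z[gamma], that
   represent every class of O_K mod Z[gamma]. *)
Definition is_index (K : fieldExtType rat) (gamma : K) (d : nat) : Prop :=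
  exists s : seq K,
    [/\ size s = d,
        forall i, (i < d)%N -> integral (nth 0 s i),
        forall i j, (i < d)%N -> (j < d)%N ->
          inZgamma gamma (nth 0 s i - nth 0 s j) -> i = j
      & forall x, integral x ->
          exists2 i, (i < d)%N & inZgamma gamma (x - nth 0 s i)].

Definition inI (K : fieldExtType rat) (a : nat) (alpha x : K) : Prop :=
  exists y z, [/\ integral y, integral z & x = a%:R * y + alpha * z].

Definition is_min (K : fieldExtType rat) (a : nat) (alpha : K) (m : nat) : Prop :=
  (0 < m)%N /\ forall z : int, inI a alpha (z%:~R) <-> (m%:Z %| z)%Z.

(* Z/aZ is represented by integers modulo a.
   r : int represents the image in Z/aZ of q : rat (with denominator
   coprime to a): r * denq q = numq q  in Z/aZ. *)
Definition red_rat (a : nat) (q : rat) (r : int) : Prop :=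
  (r * denq q == numq q %[mod a%:Z])%Z.

(* G : {poly int} is a lift of the image gbar in (Z/aZ)[x] of g : {poly rat}. *)
Definition red_poly (a : nat) (g : {poly rat}) (G : {poly int}) : Prop :=
  forall i, red_rat a g`_i G`_i.

(* c mod a lies in Rres_{Z/aZ}(Gbar, Fbar) = (Gbar, Fbar) cap Z/aZ. *)
Definition in_Rres_mod (a : nat) (G F : {poly int}) (c : int) : Prop :=
  exists u v : {poly int},
    forall i, ((u * G + v * F)`_i == (c%:P)`_i %[mod a%:Z])%Z.

Definition Rres_is_ideal (a : nat) (G F : {poly int}) (m : nat) : Prop :=
  forall c : int, in_Rres_mod a G F c <->
    exists k : int, (c == k * m%:Z %[mod a%:Z])%Z.

(* Main.v *)
Require Import Defs.
From HB Require Import structures.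
From mathcomp Require Import all_boot all_order all_algebra all_field.
From mathcomp Require Import ring zify.
From Stdlib Require Import ClassicalEpsilon.
Import Order.TTheory GRing.Theory Num.Theory.
Local Open Scope ring_scope.

Section Aux.
Context {K : fieldExtType rat}.
Variable gamma : K.
Implicit Types x y z : K.

Lemma integralE x : integral x <-> integralOver (intr : int -> K) x.
Proof. by split=> [[p [mp rp]]|[p mp rp]]; [exists p|exists p]. Qed.

Lemma integral_int (c : int) : integral (c%:~R : K).
Proof. apply/integralE; exact: integral_id. Qed.

Lemma integralD {x y} : integral x -> integral y -> integral (x + y).
Proof. by move=> /integralE hx /integralE hy; apply/integralE; apply: integral_add. Qed.
Lemma integralM {x y} : integral x -> integral y -> integral (x * y).
Proof. by move=> /integralE hx /integralE hy; apply/integralE; apply: integral_mul. Qed.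
Lemma integralN {x} : integral x -> integral (- x).
Proof. by move=> /integralE hx; apply/integralE; apply: integral_opp. Qed.

Definition ev (p : {poly int}) : K := (map_poly intr p).[gamma].

Lemma evD p q : ev (p + q) = ev p + ev q.
Proof. by rewrite /ev rmorphD hornerD. Qed.
Lemma evB p q : ev (p - q) = ev p - ev q.
Proof. by rewrite /ev rmorphB hornerD hornerN. Qed.
Lemma evM p q : ev (p * q) = ev p * ev q.
Proof. by rewrite /ev rmorphM hornerM. Qed.
Lemma evN p : ev (- p) = - ev p.
Proof. by rewrite /ev rmorphN hornerN. Qed.
Lemma evC c : ev (c%:P) = c%:~R.
Proof. by rewrite /ev map_polyC hornerC. Qed.

Lemma ev_integral p : integral gamma -> integral (ev p).
Proof.
move=> /integralE hg; apply/integralE; apply: integral_horner => //.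
apply/integral_poly => i; rewrite coef_map; exact: integral_id.
Qed.


Lemma inZg0 : inZgamma gamma 0.
Proof. by exists 0; rewrite rmorph0 horner0. Qed.
Lemma inZgD {x y} : inZgamma gamma x -> inZgamma gamma y -> inZgamma gamma (x + y).
Proof. by move=> [p ->] [q ->]; exists (p + q); rewrite rmorphD hornerD. Qed.
Lemma inZgB {x y} : inZgamma gamma x -> inZgamma gamma y -> inZgamma gamma (x - y).
Proof. by move=> [p ->] [q ->]; exists (p - q); rewrite rmorphB hornerD hornerN. Qed.

Lemma index_mul d z : is_index gamma d -> integral z -> exists Z, d%:R * z = ev Z.
Proof.
case=> s [sz sint sinj scov] zi.
have H : forall i : 'I_d, exists j : 'I_d, inZgamma gamma (nth 0 s i + z - nth 0 s j).
  move=> i; have [j jd hj] := scov _ (integralD (sint _ (ltn_ord i)) zi).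
  by exists (Ordinal jd).
pose phi i := proj1_sig (constructive_indefinite_description _ (H i)).
have phiP (i : 'I_d) : inZgamma gamma (nth 0 s i + z - nth 0 s (phi i)).
  exact: (proj2_sig (constructive_indefinite_description _ (H i))).
have phi_inj : injective phi.
  move=> i k e; apply/val_inj/(sinj _ _ (ltn_ord i) (ltn_ord k)).
  have := inZgB (phiP i) (phiP k); rewrite e.
  by congr (inZgamma _ _); ring.
have : inZgamma gamma (\sum_(i < d) (nth 0 s i + z - nth 0 s (phi i))).
  by apply: big_ind => //; [exact: inZg0 | move=> ? ?; exact: inZgD].
have -> : \sum_(i < d) (nth 0 s i + z - nth 0 s (phi i)) = d%:R * z.
  rewrite sumrB big_split /= sumr_const card_ord.
  rewrite [X in X + _ - _](reindex_inj phi_inj) /=.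
  by rewrite addrAC subrr add0r mulr_natl.
by case=> p ->; exists p.
Qed.

Lemma intrK_inj : injective (intr : int -> K).
Proof.
move=> x y e; apply/eqP; rewrite -subr_eq0.
have : ((x - y)%:~R : K) == 0 by rewrite rmorphB /= e subrr.
by rewrite -(rmorph_int (in_alg K)) fmorph_eq0 intr_eq0.
Qed.

Lemma size_mapK (p : {poly int}) : size (map_poly (intr : int -> K) p) = size p.
Proof. by apply: size_map_inj_poly; [exact: intrK_inj | exact: rmorph0]. Qed.

Lemma minpoly_div (f P : {poly int}) : f \is monic ->
  map_poly intr f = minPoly 1%VS gamma -> ev P = 0 -> exists Q, P = Q * f.
Proof.
move=> mf hf eP.
have := Pdiv.Idomain.divp_eq P f; rewrite (monicP mf) expr1n scale1r => eq1.
exists (Pdiv.Idomain.divp P f).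
suff r0 : Pdiv.Idomain.modp P f = 0 by rewrite {1}eq1 r0 addr0.
set r := Pdiv.Idomain.modp P f in eq1 *.
have ef : ev f = 0 by rewrite /ev hf; apply/eqP; exact: root_minPoly.
have er : ev r = 0.
  by move: eP; rewrite eq1 evD evM ef mulr0 add0r.
have : map_poly (intr : int -> K) r == 0.
  apply: contraT => nz.
  have dv : minPoly 1%VS gamma %| map_poly intr r.
    apply: minPoly_dvdp; last by apply/eqP.
    apply/polyOver1P; exists (map_poly intr r); rewrite -map_poly_comp.
    by apply: eq_map_poly => c /=; rewrite -in_algE rmorph_int.
  have := dvdp_leq nz dv; rewrite -hf !size_mapK.
  have := Pdiv.Idomain.ltn_modpN0 P (monic_neq0 mf).
  by rewrite -/r; case: (size r) => [|n]; case: (size f) => [|m] //= ; lia.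
move=> /eqP h; apply/polyP => i; apply: intrK_inj.
by rewrite coef0 rmorph0 -coef_map h coef0.
Qed.

End Aux.

Lemma dvd_poly (c : int) (R : {poly int}) :
  (forall i, (c %| R`_i)%Z) -> exists W, R = c%:P * W.
Proof.
move=> h; exists (\poly_(i < size R) (R`_i %/ c)%Z); apply/polyP => i.
rewrite coefCM coef_poly; case: ltnP => hi; first by rewrite mulrC divzK.
by rewrite mulr0 nth_default.
Qed.

Lemma poly_dvd {c : int} {R W : {poly int}} :
  R = c%:P * W -> forall i, (c %| R`_i)%Z.
Proof. by move=> -> i; rewrite coefCM dvdz_mulr. Qed.

Section Den.
Variable g : {poly rat}.
Definition Dn : int := \prod_(j < size g) denq g`_j.
Definition Pr (i : nat) : int := \prod_(j < size g | (j : nat) != i) denq g`_j.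
Definition hp : {poly int} := \poly_(i < size g) (numq g`_i * Pr i).

Lemma Dsplit i : Dn = denq g`_i * Pr i.
Proof.
rewrite /Dn /Pr; case: (ltnP i (size g)) => hi.
  by rewrite (bigD1 (Ordinal hi)) //=.
rewrite nth_default // mul1r; apply: eq_bigl => j.
by apply/esym/negP => /eqP e; move: (ltn_ord j); rewrite e ltnNge hi.
Qed.

Lemma hcoef i : hp`_i = numq g`_i * Pr i.
Proof.
rewrite coef_poly; case: ltnP => // hi.
by rewrite (nth_default _ hi) mul0r.
Qed.

Lemma hrat i : (hp`_i)%:~R = Dn%:~R * g`_i :> rat.
Proof.
by rewrite hcoef rmorphM /= numqE (Dsplit i) rmorphM /=; ring.
Qed.

Lemma Dn_coprime (a : int) : (forall i, coprimez (denq g`_i) a) -> coprimez Dn a.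
Proof.
move=> h; rewrite /Dn; apply: (big_ind (fun x => coprimez x a)) => //.
  by rewrite coprimezE /= coprime1n.
by move=> x y hx hy; rewrite coprimezMl hx hy.
Qed.

Lemma hcong (a : nat) (G : {poly int}) : red_poly a g G ->
  exists T, Dn%:P * G = hp + (a%:Z)%:P * T.
Proof.
move=> hr; have [W hW] : exists W, Dn%:P * G - hp = (a%:Z)%:P * W.
  apply: dvd_poly => i; rewrite coefB coefCM hcoef (Dsplit i).
  have := hr i; rewrite /red_rat eqz_mod_dvd => /(dvdz_mulr (Pr i)).
  congr (_ %| _)%Z; ring.
by exists W; rewrite -hW; ring.
Qed.

Lemma ev_hp (K : fieldExtType rat) (gamma : K) :
  ev gamma hp = Dn%:~R * (map_poly (in_alg K) g).[gamma].
Proof.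
rewrite /ev -hornerCM; congr (_.[_]); apply/polyP => i.
rewrite coefCM !coef_map /= -in_algE -(rmorph_int (in_alg K) hp`_i).
by rewrite -(rmorph_int (in_alg K) Dn) -rmorphM hrat.
Qed.
End Den.

Lemma intr_natK (K : fieldExtType rat) (n : nat) : ((n%:Z)%:~R : K) = n%:R.
Proof. by rewrite -pmulrn. Qed.

Lemma Rres_to_I (K : fieldExtType rat) (gamma : K) (f : {poly int}) (a : nat)
  (alpha : K) (g : {poly rat}) (G : {poly int}) :
  integral gamma -> f \is monic -> map_poly intr f = minPoly 1%VS gamma ->
  (map_poly (in_alg K) g).[gamma] = alpha ->
  (forall i, coprimez (denq g`_i) a%:Z) -> red_poly a g G ->
  forall c : int, in_Rres_mod a G f c -> inI a alpha (c%:~R : K).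
Proof.
move=> ig mf hf ha hcop hr c [u [v huv]].
have [W E1] : exists W, u * G + v * f - c%:P = (a%:Z)%:P * W.
  by apply: dvd_poly => i; rewrite coefB -eqz_mod_dvd.
have [T E2] := @hcong g a G hr.
have Ec : c%:P = u * G + v * f - (a%:Z)%:P * W by rewrite -E1; ring.
have Eh : hp g = (Dn g)%:P * G - (a%:Z)%:P * T by rewrite E2; ring.
have E3 : (Dn g)%:P * c%:P = u * hp g + (a%:Z)%:P * (u * T - (Dn g)%:P * W)
           + ((Dn g)%:P * v) * f.
  by rewrite Ec Eh; ring.
have ef : ev gamma f = 0 by rewrite /ev hf; apply/eqP; exact: root_minPoly.
have := congr1 (ev gamma) E3.
rewrite !(evB, evD, evM, evC, evN) ef ev_hp ha mulr0 addr0 intr_natK => E4.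
have [[e t] /= hb] := coprimezP _ _ (@Dn_coprime g a%:Z hcop).
exists ((e%:~R) * ev gamma (u * T - (Dn g)%:P * W) + (t * c)%:~R).
exists (e%:~R * ((Dn g)%:~R * ev gamma u)).
split.
- apply: integralD; last exact: integral_int.
  by apply: integralM; [exact: integral_int | exact: ev_integral].
- by apply: integralM; [exact: integral_int | apply: integralM; [exact: integral_int | exact: ev_integral]].
have -> : (c%:~R : K) = e%:~R * ((Dn g)%:~R * c%:~R) + (t * a%:Z * c)%:~R.
  rewrite -!rmorphM -rmorphD /=; congr (_%:~R).
  by rewrite mulrA -mulrDl hb mul1r.
rewrite E4 !(evB, evM, evC, evN) !rmorphM /= intr_natK; ring.
Qed.

Lemma I_to_Rres (K : fieldExtType rat) (gamma : K) (f : {poly int}) (a : nat)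
  (alpha : K) (g : {poly rat}) (G : {poly int}) :
  integral gamma -> f \is monic -> map_poly intr f = minPoly 1%VS gamma ->
  (exists d, is_index gamma d /\ coprime a d) ->
  (map_poly (in_alg K) g).[gamma] = alpha ->
  (forall i, coprimez (denq g`_i) a%:Z) -> red_poly a g G ->
  forall c : int, inI a alpha (c%:~R : K) -> in_Rres_mod a G f c.
Proof.
move=> ig mf hf [d [hid cad]] ha hcop hr c [y [z [iy iz Hc]]].
have [Y eY] := @index_mul _ gamma d y hid iy.
have [Z eZ] := @index_mul _ gamma d z hid iz.
pose P := (Dn g * d%:Z * c)%:P - (a%:Z)%:P * (Dn g)%:P * Y - hp g * Z.
have eP : ev gamma P = 0.
  rewrite /P !(evB, evM, evC) ev_hp ha -eY -eZ !rmorphM /= Hc !intr_natK; ring.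
have [Q eQ] := @minpoly_div _ gamma f P mf hf eP.
have [T E2] := @hcong g a G hr.
have cop : coprimez (Dn g * d%:Z) a%:Z.
  rewrite coprimezMl (@Dn_coprime g a%:Z hcop) /=.
  by rewrite coprimezE /= coprime_sym.
have [[e t] /= hb] := coprimezP _ _ cop.
exists (e%:P * (Dn g)%:P * Z), (e%:P * Q).
have Ec1 : c%:P = e%:P * (Q * f + (a%:Z)%:P * (Dn g)%:P * Y + hp g * Z)
                  + t%:P * (a%:Z)%:P * c%:P.
  have -> : Q * f + (a%:Z)%:P * (Dn g)%:P * Y + hp g * Z = (Dn g * d%:Z * c)%:P.
    by rewrite -eQ /P; ring.
  rewrite -!polyCM -polyCD; congr (_%:P).
  transitivity ((e * (Dn g * d%:Z) + t * a%:Z) * c); first by rewrite hb mul1r.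
  ring.
have Eh : hp g = (Dn g)%:P * G - (a%:Z)%:P * T by rewrite E2; ring.
have key : (e%:P * (Dn g)%:P * Z) * G + (e%:P * Q) * f - c%:P =
   (a%:Z)%:P * (e%:P * T * Z - e%:P * (Dn g)%:P * Y - t%:P * c%:P).
  by rewrite {1}Ec1 Eh; ring.
by move=> i; rewrite eqz_mod_dvd -coefB; exact: (poly_dvd key).
Qed.

Definition pb (P : Prop) : bool := if excluded_middle_informative P then true else false.
Lemma pbP (P : Prop) : reflect P (pb P).
Proof. by rewrite /pb; case: excluded_middle_informative => h; constructor. Qed.

Section MinI.
Context {K : fieldExtType rat} (a : nat) (alpha : K).

Lemma inI_sub x1 x2 : inI a alpha x1 -> inI a alpha x2 -> inI a alpha (x1 - x2).
Proof.
move=> [y1 [z1 [i1 j1 ->]]] [y2 [z2 [i2 j2 ->]]].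
exists (y1 - y2), (z1 - z2); split; try by apply: integralD => //; apply: integralN.
ring.
Qed.

Lemma inI_mul (k : int) x : inI a alpha x -> inI a alpha (k%:~R * x).
Proof.
move=> [y [z [i j ->]]]; exists (k%:~R * y), (k%:~R * z).
by split; [apply: integralM => //; exact: integral_int | apply: integralM => //; exact: integral_int | ring].
Qed.

Lemma inI_a : inI a alpha (a%:Z)%:~R.
Proof.
exists 1, 0; split; [exact: (integral_int 1) | exact: (integral_int 0) |].
by rewrite intr_natK mulr1 mulr0 addr0.
Qed.

Lemma min_exists : (0 < a)%N -> exists m, is_min a alpha m.
Proof.
move=> apos.
have ex : exists n, (0 < n)%N && pb (inI a alpha (n%:Z)%:~R).
  by exists a; rewrite apos; apply/pbP; exact: inI_a.
case: (ex_minnP ex) => m /andP [mpos /pbP Im] minm.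
exists m; split => // z; split => [Iz | /dvdz_mod0P hz]; last first.
  rewrite (divz_eq z m%:Z) hz addr0 rmorphM /=; exact: inI_mul.
apply/dvdz_mod0P.
have mnz : m%:Z != 0 by rewrite eqz_nat -lt0n.
have r0 := modz_ge0 z mnz.
have rlt := ltz_pmod z (_ : 0 < m%:Z) .
have Ir : inI a alpha (((z %% m)%Z)%:~R : K).
  have -> : (z %% m)%Z = z - (z %/ m)%Z * m%:Z by rewrite {2}(divz_eq z m%:Z); ring.
  rewrite rmorphB rmorphM /=; apply: inI_sub => //; exact: inI_mul.
move: r0 rlt Ir; case: (z %% m)%Z => n //= _ rlt In.
case: n rlt In => // n rlt In.
have := minm n.+1; rewrite /= (introT (pbP _) In) => /(_ isT).
by rewrite leqNgt -ltz_nat rlt.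
Qed.
End MinI.

Lemma div_of_ideal {a G f} {m1 m2 : nat} : (m2 %| a)%N ->
  Rres_is_ideal a G f m1 -> Rres_is_ideal a G f m2 -> (m2 %| m1)%N.
Proof.
move=> d2 R1 R2.
have := (R1 m1%:Z).2 (ex_intro _ 1 _).
case/(_ _)/(R2 _).1; first by rewrite mul1r.
move=> k; rewrite eqz_mod_dvd => hk.
have h : (m2%:Z %| m1%:Z - k * m2%:Z)%Z.
  by apply: dvdz_trans hk; rewrite dvdzE.
have : (m2%:Z %| m1%:Z)%Z.
  by rewrite -(subrK (k * m2%:Z) m1%:Z) rpredD // dvdz_mull // dvdzz.
by rewrite dvdzE.
Qed.

Theorem lemma8p3 (K : fieldExtType rat) (gamma : K) (f : {poly int})
  (a : nat) (alpha : K) (g : {poly rat}) :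
  integral gamma ->
  <<1%VS; gamma>>%VS = fullv ->
  f \is monic ->
  map_poly intr f = minPoly 1%VS gamma ->
  (0 < a)%N ->
  integral alpha ->
  (exists d, is_index gamma d /\ coprime a d) ->
  (map_poly (in_alg K) g).[gamma] = alpha ->
  (forall i, coprimez (denq g`_i) a%:Z) ->
  forall G : {poly int}, red_poly a g G ->
  [/\ exists m, is_min a alpha m,
      forall m, is_min a alpha m -> (m %| a)%N /\ Rres_is_ideal a G f m
    & forall m1 m2, (0 < m1)%N -> (m1 %| a)%N -> Rres_is_ideal a G f m1 ->
        (0 < m2)%N -> (m2 %| a)%N -> Rres_is_ideal a G f m2 -> m1 = m2].
Proof.
move=> ig hfull mf hf apos ialpha hd ha hcop G hr.
have equiv (c : int) : inI a alpha (c%:~R : K) <-> in_Rres_mod a G f c.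
  split; [exact: (@I_to_Rres K gamma f a alpha g G ig mf hf hd ha hcop hr) | exact: (@Rres_to_I K gamma f a alpha g G ig mf hf ha hcop hr)].
split.
- exact: min_exists.
- move=> m [mpos hm].
  have mda : (m %| a)%N by have := (hm a%:Z).1 (inI_a a alpha); rewrite dvdzE.
  split=> // c; split => [/equiv/hm hmc | [k hk]].
    by exists (c %/ m%:Z)%Z; rewrite divzK.
  apply/equiv/hm; move: hk; rewrite eqz_mod_dvd => hk.
  have h : (m%:Z %| c - k * m%:Z)%Z by apply: dvdz_trans hk; rewrite dvdzE.
  by rewrite -(subrK (k * m%:Z) c) rpredD // dvdz_mull // dvdzz.
- move=> m1 m2 p1 d1 R1 p2 d2 R2; apply/eqP; rewrite eqn_dvd.
  by rewrite (div_of_ideal d1 R2 R1) (div_of_ideal d2 R1 R2).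
Qed.
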